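(* Let $\Pi$ be a finite nonempty set of policies, $\Theta^T$ a finite nonempty set of environment parameterizations, and $U^{\vec\theta}(\pi)\in\mathbb{R}$ the utility of $\pi$ under $\vec\theta$. Then there exists an environment policy $\Lambda:\Pi\to\Delta(\Theta^T)$ such that $$\arg\max_{\pi\in\Pi}\ \mathbb{E}_{\vec\theta\sim\Lambda(\pi)}\big[U^{\vec\theta}(\pi)\big]=\textsc{MinimaxRegret}.$$
   Context: $\Delta(\Theta^T)$ denotes the set of probability distributions on $\Theta^T$. Regret: $\textsc{Regret}(\pi,\vec\theta)=\max_{\pi^B\in\Pi}\{U^{\vec\theta}(\pi^B)-U^{\vec\theta}(\pi)\}$. Minimax regret policies: $\textsc{MinimaxRegret}=\arg\min_{\pi\in\Pi}\max_{\vec\theta\in\Theta^T}\textsc{Regret}(\pi,\vec\theta)$. *)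

(* Defs.v *)
From HB Require Import structures.
From mathcomp Require Import all_boot all_order all_algebra.
Set Implicit Arguments. Unset Strict Implicit. Unset Printing Implicit Defensive.
Import Order.TTheory GRing.Theory Num.Theory.
Local Open Scope ring_scope.

Section Defs.
Variable R : realFieldType.

(* maximum of F over a finite type T (value 0 if T is empty; only used for
   nonempty T) *)
Definition fmax (T : finType) (F : T -> R) : R :=
  if [pick x : T] is Some x0 then \big[Num.max/F x0]_(i : T) F i else 0.

Definition is_distr (T : finType) (p : {ffun T -> R}) : Prop :=
  (forall t, 0 <= p t) /\ \sum_(t : T) p t = 1.

Definition expect (T : finType) (p : {ffun T -> R}) (f : T -> R) : R :=
  \sum_(t : T) p t * f t.

Definition is_argmax (T : finType) (F : T -> R) (x : T) : Prop :=
  forall y, F y <= F x.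
Definition is_argmin (T : finType) (F : T -> R) (x : T) : Prop :=
  forall y, F x <= F y.

(* U th pi = U^th(pi) *)
Definition Regret (Pi Theta : finType) (U : Theta -> Pi -> R)
  (pi : Pi) (th : Theta) : R :=
  fmax (fun piB => U th piB) - U th pi.

Definition max_regret (Pi Theta : finType) (U : Theta -> Pi -> R) (pi : Pi) : R :=
  fmax (fun th => Regret U pi th).

Definition MinimaxRegret (Pi Theta : finType) (U : Theta -> Pi -> R) (pi : Pi) : Prop :=
  is_argmin (max_regret U) pi.
End Defs.

(* Main.v *)
Require Import Defs.
From HB Require Import structures.
From mathcomp Require Import all_boot all_order all_algebra.
From mathcomp Require Import ring lra.
Import Order.TTheory GRing.Theory Num.Theory.
Local Open Scope ring_scope.
Set Implicit Arguments. Unset Strict Implicit.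

Section Helpers.
Variable R : realFieldType.

Lemma bmax_ge (T : eqType) (F : T -> R) (a : R) (r : seq T) y :
  y \in r -> F y <= \big[Num.max/a]_(i <- r) F i.
Proof.
elim: r => [//|x r IH]; rewrite inE big_cons => /orP [/eqP ->|yr].
  by rewrite le_max lexx.
by rewrite le_max IH ?orbT.
Qed.

Lemma bmax_in (T : eqType) (F : T -> R) (x0 : T) (r : seq T) :
  exists x, \big[Num.max/F x0]_(i <- r) F i = F x.
Proof.
elim: r => [|x r [z IH]]; first by exists x0; rewrite big_nil.
rewrite big_cons IH maxEle; case: ifP => _; by [exists z | exists x].
Qed.

Lemma fmax_ge (T : finType) (F : T -> R) y : F y <= fmax F.
Proof.
rewrite /fmax; case: pickP => [x0 _|H]; last by have := H y.
exact: bmax_ge (mem_index_enum y).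
Qed.

Lemma fmax_ex (T : finType) (F : T -> R) (y : T) : exists x, fmax F = F x.
Proof.
rewrite /fmax; case: pickP => [x0 _|H]; last by have := H y.
exact: bmax_in.
Qed.

Definition delta (T : finType) (a : T) : {ffun T -> R} := [ffun t => (t == a)%:R].

Lemma expect_delta (T : finType) (a : T) f : expect (delta a) f = f a.
Proof.
rewrite /expect (bigD1 a) //= ffunE eqxx mul1r big1 ?addr0 // => t /negbTE ta.
by rewrite ffunE ta mul0r.
Qed.

Definition mix (T : finType) (l : R) (p q : {ffun T -> R}) : {ffun T -> R} :=
  [ffun t => l * p t + (1 - l) * q t].

Lemma expect_mix (T : finType) l (p q : {ffun T -> R}) f :
  expect (mix l p q) f = l * expect p f + (1 - l) * expect q f.
Proof.
rewrite /expect !mulr_sumr -big_split /=; apply: eq_bigr => t _.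
rewrite ffunE; ring.
Qed.

Lemma distrE (T : finType) (p : {ffun T -> R}) :
  (forall t, 0 <= p t) -> expect p (fun _ => 1) = 1 -> is_distr p.
Proof.
move=> H1 H2; split => //; rewrite -H2 /expect; apply: eq_bigr => t _; by rewrite mulr1.
Qed.

Lemma distr_delta (T : finType) (a : T) : is_distr (delta a).
Proof. apply: distrE; last by rewrite expect_delta. by move=> t; rewrite ffunE ler0n. Qed.

Lemma distr_mix (T : finType) l (a b : T) : 0 <= l <= 1 ->
  is_distr (mix l (delta a) (delta b)).
Proof.
move=> /andP [l0 l1]; apply: distrE; last by rewrite expect_mix !expect_delta; ring.
move=> t; rewrite ffunE !ffunE; apply: addr_ge0; apply: mulr_ge0 => //.
by rewrite subr_ge0.
Qed.

Lemma minimax_lt (Pi Theta : finType) (U : Theta -> Pi -> R) (th0 : Theta) pi m :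
  ~ MinimaxRegret U pi -> MinimaxRegret U m -> exists th, U th pi < U th m.
Proof.
move=> npi hm.
have : ~~ [forall y, max_regret U pi <= max_regret U y].
  by apply/negP => /forallP H; apply: npi => y; exact: H.
case/forallPn => y; rewrite -ltNge => hy.
have [th eth] := fmax_ex (fun th => Regret U pi th) th0.
exists th.
have h1 : Regret U m th <= max_regret U m by exact: (fmax_ge (fun th => Regret U m th)).
have h2 := hm y.
rewrite /max_regret in hy h2 h1; rewrite eth /Regret in hy.
rewrite /Regret in h1; lra.
Qed.

Lemma minimax_le (Pi Theta : finType) (U : Theta -> Pi -> R) (th0 : Theta) m1 m2 :
  MinimaxRegret U m1 -> MinimaxRegret U m2 -> exists th, U th m1 <= U th m2.
Proof.
move=> h1 h2.
case: (pickP (fun th => U th m1 <= U th m2)) => [th H|H]; first by exists th.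
exfalso.
have [th eth] := fmax_ex (fun th => Regret U m1 th) th0.
have g1 : Regret U m2 th <= max_regret U m2 by exact: (fmax_ge (fun th => Regret U m2 th)).
have g2 := h2 m1.
have g3 := H th; rewrite /= in g3; move/negbT: g3; rewrite -ltNge => g3.
rewrite /max_regret eth /Regret in g2; rewrite /Regret in g1.
rewrite /max_regret in g1; lra.
Qed.

End Helpers.

Theorem theorem4 (R : realFieldType) (Pi Theta : finType)
  (hPi : (0 < #|Pi|)%N) (hTheta : (0 < #|Theta|)%N) (U : Theta -> Pi -> R) :
  exists Lambda : Pi -> {ffun Theta -> R},
    (forall pi, is_distr (Lambda pi)) /\
    (forall pi : Pi,
       is_argmax (fun pi' => expect (Lambda pi') (fun th => U th pi')) pi
       <-> MinimaxRegret U pi).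
Proof.
case/card_gt0P: hTheta => th0 _; case/card_gt0P: hPi => p0 _.
pose thlo pi := [arg min_(th < th0) U th pi]%O.
pose thhi pi := [arg max_(th > th0) U th pi]%O.
have thloP pi th : U (thlo pi) pi <= U th pi.
  by rewrite /thlo; case: arg_minP => // x _ H; exact: H.
have thhiP pi th : U th pi <= U (thhi pi) pi.
  by rewrite /thhi; case: arg_maxP => // x _ H; exact: H.
pose lo pi := U (thlo pi) pi.
pose hi pi := U (thhi pi) pi.
pose Mb m := [forall y, max_regret U m <= max_regret U y].
have MbP m : reflect (MinimaxRegret U m) (Mb m).
  by apply: (iffP forallP) => H y; exact: H.
have [ma Ma] : exists ma, Mb ma.
  exists [arg min_(m < p0) max_regret U m]%O; apply/forallP => y.
  by case: arg_minP => // x _ H; exact: H.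
have [ms Mms msP] : exists2 ms, Mb ms & forall m, Mb m -> hi ms <= hi m.
  exists [arg min_(m < ma | Mb m) hi m]%O; by case: arg_minP.
pose c := hi ms.
have K1 m : Mb m -> lo m <= c.
  move/MbP => hm; have [th hth] := minimax_le th0 hm (elimT (MbP ms) Mms).
  apply: le_trans (thloP m th) _; apply: le_trans hth _; exact: thhiP.
have K2 m : Mb m -> c <= hi m by move=> /msP.
have K3 pi : ~~ Mb pi -> lo pi < c.
  move=> npi; have [th hth] := minimax_lt th0 (fun H => negP npi (introT (MbP pi) H))
                                 (elimT (MbP ms) Mms).
  apply: le_lt_trans (thloP pi th) _; apply: lt_le_trans hth _; exact: thhiP.
pose lam pi := if lo pi == hi pi then 1 else (hi pi - c) / (hi pi - lo pi).
exists (fun pi => if Mb pi then mix (lam pi) (delta R (thlo pi)) (delta R (thhi pi))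
                  else delta R (thlo pi)).
have Fval pi : expect (if Mb pi then mix (lam pi) (delta R (thlo pi)) (delta R (thhi pi))
                  else delta R (thlo pi)) (fun th => U th pi) = if Mb pi then c else lo pi.
  case: ifP => Mpi; last by rewrite expect_delta.
  rewrite expect_mix !expect_delta -/(lo pi) -/(hi pi) /lam.
  have := K1 _ Mpi; have := K2 _ Mpi.
  case: eqP => [-> h1 h2|ne h1 h2]; first by rewrite mul1r subrr mul0r addr0; apply/le_anti/andP.
  have hd : hi pi - lo pi != 0 by rewrite subr_eq0 eq_sym; apply/eqP.
  field; exact: hd.
split.
  move=> pi; case: ifP => Mpi; last exact: distr_delta.
  apply: distr_mix; rewrite /lam; case: eqP => [_|ne]; first by rewrite ler01 lexx.
  have h1 := K1 _ Mpi; have h2 := K2 _ Mpi.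
  have hp : 0 < hi pi - lo pi.
    rewrite subr_gt0 lt_neqAle (le_trans h1 h2) andbT; by apply/eqP.
  rewrite divr_ge0 ?subr_ge0 ?(ltW hp) //=.

  by rewrite (ler_pdivrMr _ _ hp) mul1r; lra.
  lra.
move=> pi; split.
  move=> H; apply/MbP; apply/negPn/negP => npi.
  have := H ms; rewrite /= !Fval Mms (negbTE npi) => h.
  by have := K3 _ npi; rewrite ltNge h.
move/MbP => Mpi y /=; rewrite !Fval Mpi; case: ifP => // /negbT ny.
exact: ltW (K3 _ ny).
Qed.
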